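(* Let $\theta=(\{X_s\}_{s\in\mathcal{S}},\{\theta_s\}_{s\in\mathcal{S}})$ be an ordered partial action of an inverse semigroupoid $\mathcal{S}$ on a semilatticeoid $X$ equipped with its natural partial order. Then for each $s\in\mathcal{S}$: (a) $X_s$ is an ideal of $X$, i.e. if $x\in X$, $y\in X_s$ and $(x,y)\in X^{(2)}$ then $xy\in X_s$; (b) $\theta_s$ is a morphism, i.e. for all $x,y\in X_{s^*}$ with $(x,y)\in X^{(2)}$ we have $(\theta_s(x),\theta_s(y))\in X^{(2)}$ and $\theta_s(xy)=\theta_s(x)\theta_s(y)$.
   Context: Inverse semigroupoid: arrows $\mathcal{S}$, objects $\mathcal{S}^{(0)}$, maps $d,c$, associative multiplication on $\mathcal{S}^{(2)}=\{(s,t):d(s)=c(t)\}$ with $d(st)=d(t)$, $c(st)=c(s)$, and unique $s^*$ with $ss^*s=s$, $s^*ss^*=s^*$; natural partial order on parallel arrows: $s\leqslant t$ iff $s=te$ for an idempotent $e$ with $(t,e)\in\mathcal{S}^{(2)}$. A semilatticeoid is an inverse semigroupoid $X$ all of whose elements are idempotent; equivalently a disjoint union of meet semilattices $X_u$, $u\in X^{(0)}$, where $(x,y)\in X^{(2)}$ iff $x,y$ lie over the same object and $xy$ is their meet; the natural order is $x\leqslant y$ iff $x=xy$ (same object). A partial action of $\mathcal{S}$ on a set $X$ is a pair $(\{X_s\},\{\theta_s\})$ of subsets $X_s\subseteq X$ and maps $\theta_s:X_{s^*}\to X_s$ such that: each $\theta_s$ is a bijection with $\theta_s^{-1}=\theta_{s^*}$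 and $X=\bigcup_s X_s$; $\theta_s\circ\theta_t\subseteq\theta_{st}$ as partial maps for $(s,t)\in\mathcal{S}^{(2)}$; $X_s\subseteq X_t$ whenever $s\leqslant t$. For a poset $X$ it is ordered if each $X_s$ is an order ideal and each $\theta_s$ an order isomorphism. *)

(* Defs.v *)
Set Implicit Arguments.

(** The multiplication is a total function on the
    carrier, but all axioms only constrain it on composable pairs
    S^(2) = {(s,t) : dom s = cod t}; values outside S^(2) are irrelevant. *)
Record InvSemigroupoid := {
  arr :> Type;
  obj : Type;
  dom : arr -> obj;
  cod : arr -> obj;
  mul : arr -> arr -> arr;
  star : arr -> arr;
  dom_mul : forall s t, dom s = cod t -> dom (mul s t) = dom t;
  cod_mul : forall s t, dom s = cod t -> cod (mul s t) = cod s;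
  mul_assoc : forall s t u, dom s = cod t -> dom t = cod u ->
    mul (mul s t) u = mul s (mul t u);
  dom_star : forall s, dom (star s) = cod s;
  cod_star : forall s, cod (star s) = dom s;
  star_l : forall s, mul (mul s (star s)) s = s;
  star_r : forall s, mul (mul (star s) s) (star s) = star s;
  star_unique : forall s t, dom s = cod t -> dom t = cod s ->
    mul (mul s t) s = s -> mul (mul t s) t = t -> t = star s
}.

Arguments dom {_} _.
Arguments cod {_} _.
Arguments mul {_} _ _.
Arguments star {_} _.

Definition composable {S : InvSemigroupoid} (s t : S) : Prop := dom s = cod t.

Definition idempotent {S : InvSemigroupoid} (e : S) : Prop :=
  composable e e /\ mul e e = e.

Definition nat_le {S : InvSemigroupoid} (s t : S) : Prop :=
  exists e, idempotent e /\ composable t e /\ s = mul t e.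

Record Semilatticeoid := {
  slo :> InvSemigroupoid;
  slo_idem : forall x : slo, idempotent x
}.

(** Partial action of S on a set X. Each theta s is represented by a total
    function X -> X, of which only the restriction to X_{s*} matters. *)
Record PartialAction (S : InvSemigroupoid) (X : Type) := {
  pdom : S -> X -> Prop;
  theta : S -> X -> X;
  theta_maps : forall s x, pdom (star s) x -> pdom s (theta s x);
  theta_inv_l : forall s x, pdom (star s) x -> theta (star s) (theta s x) = x;
  theta_inv_r : forall s y, pdom s y -> theta s (theta (star s) y) = y;
  pdom_cover : forall x, exists s, pdom s x;
  theta_comp : forall s t x, composable s t ->
    pdom (star t) x -> pdom (star s) (theta t x) ->
    pdom (star (mul s t)) x /\ theta (mul s t) x = theta s (theta t x);
  pdom_mono : forall s t, nat_le s t -> forall x, pdom s x -> pdom t x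
}.

Definition ordered_action {S : InvSemigroupoid} {X : Semilatticeoid}
  (A : PartialAction S X) : Prop :=
  forall s,
    (forall x y : X, nat_le x y -> pdom A s y -> pdom A s x) /\
    (forall x y : X, pdom A (star s) x -> pdom A (star s) y ->
       (nat_le x y <-> nat_le (theta A s x) (theta A s y))).

(* Main.v *)
Require Import Defs.

Definition atO (X : Semilatticeoid) (o : obj X) (z : X) := dom z = o /\ cod z = o.

Lemma dc (X : Semilatticeoid) (x : X) : dom x = cod x.
Proof. exact (proj1 (slo_idem X x)). Qed.

Lemma mm (X : Semilatticeoid) (x : X) : mul x x = x.
Proof. exact (proj2 (slo_idem X x)). Qed.

Lemma at_of (X : Semilatticeoid) (x : X) : atO X (dom x) x.
Proof. split; [reflexivity | symmetry; apply dc]. Qed.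

Lemma at_mul (X : Semilatticeoid) o (x y : X) : atO X o x -> atO X o y -> atO X o (mul x y).
Proof.
  intros [] []; split; [rewrite dom_mul by congruence | rewrite cod_mul by congruence]; congruence.
Qed.

Ltac atac := repeat apply at_mul; assumption.

Lemma assoc' (X : Semilatticeoid) o (a b c : X) :
  atO X o a -> atO X o b -> atO X o c -> mul (mul a b) c = mul a (mul b c).
Proof. intros [] [] []; apply mul_assoc; congruence. Qed.

Lemma mml (X : Semilatticeoid) o (a z : X) :
  atO X o a -> atO X o z -> mul a (mul a z) = mul a z.
Proof. intros; rewrite <- (assoc' X o) by atac; rewrite mm; reflexivity. Qed.

Lemma star_id (X : Semilatticeoid) (z : X) : star z = z.
Proof. symmetry; apply star_unique; try apply dc; rewrite !mm; reflexivity. Qed.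

Lemma comm (X : Semilatticeoid) o (x y : X) :
  atO X o x -> atO X o y -> mul x y = mul y x.
Proof.
  intros hx hy.
  assert (E : mul y x = star (mul x y)).
  { pose proof hx as [h1 h2]; pose proof hy as [h3 h4].
    apply star_unique.
    - rewrite dom_mul, cod_mul by congruence; congruence.
    - rewrite dom_mul, cod_mul by congruence; congruence.
    - repeat rewrite (assoc' X o) by atac.
      rewrite (mml X o y) by atac. rewrite (mml X o x) by atac.
      rewrite <- (assoc' X o x y) by atac. apply mm.
    - repeat rewrite (assoc' X o) by atac.
      rewrite (mml X o x) by atac. rewrite (mml X o y) by atac.
      rewrite <- (assoc' X o y x) by atac. apply mm. }
  rewrite E, star_id; reflexivity.
Qed.

Lemma le_iff (X : Semilatticeoid) (w x : X) :
  nat_le w x <-> (composable w x /\ mul w x = w).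
Proof.
  split.
  - intros [e [[He _] [Hc ->]]].
    unfold composable in *.
    assert (ax : atO X (dom x) x) by apply at_of.
    assert (ae : atO X (dom x) e) by (split; rewrite Hc; [exact He | reflexivity]).
    split.
    + destruct (at_mul X _ x e ax ae) as [a1 a2]. destruct ax; congruence.
    + rewrite (assoc' X (dom x)) by atac. rewrite (comm X (dom x) e x) by atac.
      rewrite (mml X (dom x)) by atac. reflexivity.
  - intros [Hc Hm]. unfold composable in Hc.
    assert (aw : atO X (dom w) w) by apply at_of.
    assert (ax : atO X (dom w) x) by (split; rewrite Hc; [apply dc | reflexivity]).
    exists w. split; [apply slo_idem|]. split.
    + unfold composable. rewrite dc, <- Hc, dc. reflexivity.
    + rewrite <- (comm X (dom w)) by atac. congruence.
Qed.

Lemma meet_le2 (X : Semilatticeoid) (x y : X) : composable x y -> nat_le (mul x y) x.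
Proof.
  intros Hc; apply le_iff; unfold composable in *.
  assert (ax : atO X (dom x) x) by apply at_of.
  assert (ay : atO X (dom x) y) by (split; rewrite Hc; [apply dc | reflexivity]).
  split.
  - destruct (at_mul X _ x y ax ay); destruct ax; congruence.
  - rewrite (comm X (dom x) x y) by atac. rewrite (assoc' X (dom x)) by atac.
    rewrite (mm X x). reflexivity.
Qed.

Lemma meet_le1 (X : Semilatticeoid) (x y : X) : composable x y -> nat_le (mul x y) y.
Proof.
  intros Hc; apply le_iff; unfold composable in *.
  assert (ax : atO X (dom x) x) by apply at_of.
  assert (ay : atO X (dom x) y) by (split; rewrite Hc; [apply dc | reflexivity]).
  split.
  - destruct (at_mul X _ x y ax ay); destruct ay; congruence.
  - rewrite (assoc' X (dom x)) by atac. rewrite (mm X y). reflexivity.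
Qed.

Lemma glb (X : Semilatticeoid) (w x y : X) :
  nat_le w x -> nat_le w y -> composable x y -> nat_le w (mul x y).
Proof.
  intros H1 H2 Hc. apply le_iff in H1 as [c1 m1]. apply le_iff in H2 as [c2 m2].
  unfold composable in *.
  assert (aw : atO X (dom w) w) by apply at_of.
  assert (ax : atO X (dom w) x) by (split; rewrite c1; [apply dc | reflexivity]).
  assert (ay : atO X (dom w) y) by (split; rewrite c2; [apply dc | reflexivity]).
  apply le_iff; split.
  - destruct (at_mul X _ x y ax ay); destruct aw; congruence.
  - rewrite <- (assoc' X (dom w)) by atac. congruence.
Qed.

Lemma antisym (X : Semilatticeoid) (a b : X) : nat_le a b -> nat_le b a -> a = b.
Proof.
  intros H1 H2. apply le_iff in H1 as [c1 m1]. apply le_iff in H2 as [c2 m2].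
  unfold composable in *.
  assert (aa : atO X (dom a) a) by apply at_of.
  assert (ab : atO X (dom a) b) by (split; rewrite c1; [apply dc | reflexivity]).
  transitivity (mul a b); [symmetry; exact m1|]. rewrite (comm X (dom a)) by assumption. exact m2.
Qed.

Lemma star_star (S : InvSemigroupoid) (s : S) : star (star s) = s.
Proof.
  symmetry; apply star_unique.
  - apply dom_star.
  - symmetry; apply cod_star.
  - apply star_r.
  - apply star_l.
Qed.

Lemma part_a (S : InvSemigroupoid) (X : Semilatticeoid) (A : PartialAction S X) :
  ordered_action A -> forall s (x y : X), pdom A s y -> composable x y -> pdom A s (mul x y).
Proof.
  intros HO s x y Hy Hc. apply (proj1 (HO s)) with y; [apply meet_le1; exact Hc | exact Hy].
Qed.

Theorem mainTheorem8 (S : InvSemigroupoid) (X : Semilatticeoid)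
  (A : PartialAction S X) :
  ordered_action A ->
  forall s : S,
    (forall x y : X, pdom A s y -> composable x y -> pdom A s (mul x y)) /\
    (forall x y : X, pdom A (star s) x -> pdom A (star s) y -> composable x y ->
       composable (theta A s x) (theta A s y) /\
       theta A s (mul x y) = mul (theta A s x) (theta A s y)).
Proof.
  intros HO s. split.
  - intros; eapply part_a; eauto.
  - intros x y Hx Hy Hc.
    destruct (HO s) as [_ Hiff].
    assert (Hxy : pdom A (star s) (mul x y)) by (eapply part_a; eauto).
    assert (L1 : nat_le (theta A s (mul x y)) (theta A s x))
      by (apply (Hiff _ _ Hxy Hx); apply meet_le2; exact Hc).
    assert (L2 : nat_le (theta A s (mul x y)) (theta A s y))
      by (apply (Hiff _ _ Hxy Hy); apply meet_le1; exact Hc).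
    assert (Cxy : composable (theta A s x) (theta A s y)).
    { apply le_iff in L1 as [c1 _]. apply le_iff in L2 as [c2 _].
      unfold composable in *. rewrite dc. congruence. }
    split; [exact Cxy|].
    set (z := mul (theta A s x) (theta A s y)).
    assert (Hz : pdom A s z) by (eapply part_a; eauto; apply theta_maps; exact Hy).
    assert (Hw : pdom A (star s) (theta A (star s) z))
      by (apply theta_maps; rewrite star_star; exact Hz).
    assert (Ez : theta A s (theta A (star s) z) = z) by (apply theta_inv_r; exact Hz).
    assert (W1 : nat_le (theta A (star s) z) x)
      by (apply (Hiff _ _ Hw Hx); rewrite Ez; apply meet_le2; exact Cxy).
    assert (W2 : nat_le (theta A (star s) z) y)
      by (apply (Hiff _ _ Hw Hy); rewrite Ez; apply meet_le1; exact Cxy).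
    assert (W : nat_le (theta A (star s) z) (mul x y)) by (apply glb; assumption).
    apply (Hiff _ _ Hw Hxy) in W. rewrite Ez in W.
    apply antisym; [apply glb; assumption | exact W].
Qed.
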